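(* Let $\lambda=2\cos(\pi/5)$, $\pi=\lambda+2$, and work in $GL(2,\mathbb Z[\lambda]/5\mathbb Z[\lambda])$. Let $$a=I+\pi\begin{pmatrix}4&0\\4&1\end{pmatrix},\quad b=I+\pi\begin{pmatrix}1&1\\0&4\end{pmatrix},\quad c=I+\pi\begin{pmatrix}1&4\\0&4\end{pmatrix}$$ (entries taken modulo $5$), and let $\Delta=\{a,b,c\}$. Let $S=\begin{pmatrix}0&1\\-1&0\end{pmatrix}$, $T=\begin{pmatrix}1&\lambda\\0&1\end{pmatrix}$, $J=\begin{pmatrix}0&1\\1&0\end{pmatrix}$ (reduced modulo $5$). Then the only nontrivial subgroup of $\langle\Delta\rangle$ that is invariant under conjugation by each of $S$, $T$ and $J$ is $\langle\Delta\rangle$ itself.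
   Context: $\lambda=2\cos(\pi/5)$ satisfies $\lambda^2=\lambda+1$; $\mathbb Z[\lambda]$ is the ring of integers of $\mathbb Q(\sqrt5)$, and $5=(\lambda+2)^2\lambda^{-2}$ in $\mathbb Z[\lambda]$. *)

(* Defs.v *)
From HB Require Import structures.
From mathcomp Require Import all_boot all_order all_algebra all_fingroup.
From mathcomp Require Import ring.
Set Implicit Arguments. Unset Strict Implicit. Unset Printing Implicit Defensive.
Import GRing.Theory.
Local Open Scope ring_scope.

(* Z[lambda]/5Z[lambda] = F_5[x]/(x^2 - x - 1); ZL u v stands for u + v*lambda *)
Inductive zl5 := ZL of 'F_5 & 'F_5.
Definition zl_pair (x : zl5) := let: ZL u v := x in (u, v).
Definition pair_zl (p : 'F_5 * 'F_5) := ZL p.1 p.2.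
Lemma zl_pairK : cancel zl_pair pair_zl. Proof. by case. Qed.
HB.instance Definition _ := Finite.copy zl5 (can_type zl_pairK).

Definition zl_zero := ZL 0 0.
Definition zl_opp (x : zl5) := let: ZL u v := x in ZL (- u) (- v).
Definition zl_add (x y : zl5) :=
  let: ZL u v := x in let: ZL u' v' := y in ZL (u + u') (v + v').
Lemma zl_addA : associative zl_add.
Proof. by case=> ? ? [? ?] [? ?] /=; rewrite !addrA. Qed.
Lemma zl_addC : commutative zl_add.
Proof. by case=> ? ? [? ?] /=; rewrite [_ + _]addrC [X in ZL _ X]addrC. Qed.
Lemma zl_add0 : left_id zl_zero zl_add.
Proof. by case=> ? ? /=; rewrite !add0r. Qed.
Lemma zl_addN : left_inverse zl_zero zl_opp zl_add.
Proof. by case=> ? ? /=; rewrite !addNr. Qed.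
HB.instance Definition _ := GRing.isZmodule.Build zl5 zl_addA zl_addC zl_add0 zl_addN.

Definition zl_one := ZL 1 0.
(* (u + v l)(u' + v' l) with l^2 = l + 1 *)
Definition zl_mul (x y : zl5) :=
  let: ZL u v := x in let: ZL u' v' := y in
  ZL (u * u' + v * v') (u * v' + v * u' + v * v').
Lemma zl_mulA : associative zl_mul.
Proof. by case=> ? ? [? ?] [? ?] /=; congr ZL; ring. Qed.
Lemma zl_mulC : commutative zl_mul.
Proof. by case=> ? ? [? ?] /=; congr ZL; ring. Qed.
Lemma zl_mul1 : left_id zl_one zl_mul.
Proof. by case=> ? ? /=; congr ZL; ring. Qed.
Lemma zl_mulDl : left_distributive zl_mul zl_add.
Proof. by case=> ? ? [? ?] [? ?] /=; congr ZL; ring. Qed.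
Lemma zl_one_neq0 : zl_one != zl_zero. Proof. by []. Qed.
HB.instance Definition _ := GRing.Zmodule_isComNzRing.Build zl5
  zl_mulA zl_mulC zl_mul1 zl_mulDl zl_one_neq0.

Definition zl_norm (x : zl5) : 'F_5 := let: ZL u v := x in u * u + u * v - v * v.
Definition zl_unit : pred zl5 := fun x => zl_norm x != 0.
Definition zl_inv (x : zl5) :=
  if zl_unit x then let: ZL u v := x in ZL ((u + v) / zl_norm x) (- v / zl_norm x)
  else x.
Lemma zl_mulV : {in zl_unit, left_inverse 1 zl_inv *%R}.
Proof.
case=> u v nz; have nz' : zl_unit (ZL u v) := nz.
rewrite /zl_inv nz'; move: nz'; rewrite /zl_unit /= => nz'.
by congr ZL; field.
Qed.
Lemma zl_normM x y : zl_norm (x * y) = zl_norm x * zl_norm y.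
Proof. by case: x y => ? ? [? ?] /=; ring. Qed.
Lemma zl_unitPl x y : y * x = 1 -> zl_unit x.
Proof.
move=> /(congr1 zl_norm); rewrite zl_normM /zl_unit => h.
by apply/eqP => h0; move: h; rewrite h0 mulr0.
Qed.
Lemma zl_inv_out : {in [predC zl_unit], zl_inv =1 id}.
Proof. move=> x; rewrite inE /zl_inv; case: ifP => // u /negP[]; exact: u. Qed.
HB.instance Definition _ := GRing.ComNzRing_hasMulInverse.Build zl5
  zl_mulV zl_unitPl zl_inv_out.


Definition lam : zl5 := ZL 0 1.
Definition piz : zl5 := lam + 2%:R.

Definition mx22 (p q r s : zl5) : 'M[zl5]_2 :=
  \matrix_(i < 2, j < 2)
    if i == 0 :> nat then (if j == 0 :> nat then p else q)
    else (if j == 0 :> nat then r else s).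

Definition Ma : 'M[zl5]_2 := 1%:M + piz *: mx22 4%:R 0 4%:R 1.
Definition Mb : 'M[zl5]_2 := 1%:M + piz *: mx22 1 1 0 4%:R.
Definition Mc : 'M[zl5]_2 := 1%:M + piz *: mx22 1 4%:R 0 4%:R.
Definition MS : 'M[zl5]_2 := mx22 0 1 (-1) 0.
Definition MT : 'M[zl5]_2 := mx22 1 lam 0 1.
Definition MJ : 'M[zl5]_2 := mx22 0 1 1 0.

Lemma mx22_mul p q r s p' q' r' s' :
  mx22 p q r s *m mx22 p' q' r' s' =
  mx22 (p * p' + q * r') (p * q' + q * s') (r * p' + s * r') (r * q' + s * s').
Proof.
apply/matrixP => i j; rewrite !mxE !big_ord_recr big_ord0 /= !mxE /= add0r.
by case: i => [[|[|//]] ?]; case: j => [[|[|//]] ?].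
Qed.

Lemma mx22_1 : 1%:M = mx22 1 0 0 1.
Proof.
by apply/matrixP => i j; rewrite !mxE; case: i => [[|[|//]] ?]; case: j => [[|[|//]] ?].
Qed.

Lemma mx22_aff c p q r s :
  1%:M + c *: mx22 p q r s = mx22 (1 + c * p) (c * q) (c * r) (1 + c * s).
Proof.
apply/matrixP => i j; rewrite !mxE.
by case: i => [[|[|//]] ?]; case: j => [[|[|//]] ?]; rewrite /= ?add0r ?addr0.
Qed.

Lemma unit22 p q r s p' q' r' s' :
  p * p' + q * r' = 1 -> p * q' + q * s' = 0 ->
  r * p' + s * r' = 0 -> r * q' + s * s' = 1 ->
  mx22 p q r s \in unitmx.
Proof.
move=> h1 h2 h3 h4; have := @mulmx1_unit _ _ (mx22 p q r s) (mx22 p' q' r' s').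
by rewrite mx22_mul h1 h2 h3 h4 -mx22_1 => /(_ erefl) [].
Qed.

Ltac solve22 := apply/eqP; vm_compute; reflexivity.

Lemma Ma_unit : Ma \in unitmx.
Proof.
rewrite /Ma mx22_aff; apply: (@unit22 _ _ _ _ (1 - piz * 4%:R) 0 (- (piz * 4%:R)) (1 - piz));
  solve22.
Qed.
Lemma Mb_unit : Mb \in unitmx.
Proof.
rewrite /Mb mx22_aff; apply: (@unit22 _ _ _ _ (1 - piz) (- piz) 0 (1 - piz * 4%:R));
  solve22.
Qed.
Lemma Mc_unit : Mc \in unitmx.
Proof.
rewrite /Mc mx22_aff; apply: (@unit22 _ _ _ _ (1 - piz) (- (piz * 4%:R)) 0 (1 - piz * 4%:R));
  solve22.
Qed.
Lemma MS_unit : MS \in unitmx.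
Proof. by apply: (@unit22 _ _ _ _ 0 (-1) 1 0); solve22. Qed.
Lemma MT_unit : MT \in unitmx.
Proof. by apply: (@unit22 _ _ _ _ 1 (- lam) 0 1); solve22. Qed.
Lemma MJ_unit : MJ \in unitmx.
Proof. by apply: (@unit22 _ _ _ _ 0 1 1 0); solve22. Qed.

Definition GL2 := {'GL_2[zl5]}.
Definition ga : GL2 := Sub Ma Ma_unit.
Definition gb : GL2 := Sub Mb Mb_unit.
Definition gc : GL2 := Sub Mc Mc_unit.
Definition gS : GL2 := Sub MS MS_unit.
Definition gT : GL2 := Sub MT MT_unit.
Definition gJ : GL2 := Sub MJ MJ_unit.

Definition Delta : {set GL2} := [set ga; gb; gc].

(* Main.v *)
Require Import Defs.
From mathcomp Require Import all_boot all_order all_algebra all_fingroup.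
From mathcomp Require Import ring.
Set Implicit Arguments. Unset Strict Implicit. Unset Printing Implicit Defensive.
Import GRing.Theory.

Section Aux.
Local Open Scope ring_scope.

Definition L5 : seq 'F_5 := [:: 0; 1; 2%:R; 3%:R; 4%:R].
Lemma mem_L5 (x : 'F_5) : x \in L5.
Proof. by case: x => [[|[|[|[|[|n]]]]] Hn] //; apply/orP; left; apply/eqP/val_inj. Qed.

Definition C := ('F_5 * 'F_5 * 'F_5)%type.
Definition allC (P : C -> bool) :=
  all (fun x => all (fun y => all (fun z => P (x, y, z)) L5) L5) L5.
Lemma allCP P : allC P -> forall v, P v.
Proof.
move=> /allP h [[x y] z]; have /allP := h x (mem_L5 x).
by move=> /(_ y (mem_L5 y)) /allP /(_ z (mem_L5 z)).
Qed.

Definition m4 := (zl5 * zl5 * zl5 * zl5)%type.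
Definition tomx (m : m4) : 'M[zl5]_2 := let: (p, q, r, s) := m in mx22 p q r s.
Definition mul4 (m n : m4) : m4 :=
  let: (p, q, r, s) := m in let: (p', q', r', s') := n in
  (p * p' + q * r', p * q' + q * s', r * p' + s * r', r * q' + s * s').
Lemma tomxM m n : tomx m *m tomx n = tomx (mul4 m n).
Proof. by case: m => [[[p q] r] s]; case: n => [[[p' q'] r'] s']; rewrite /= mx22_mul. Qed.

Lemma tomx_inj m n : tomx m = tomx n -> m = n.
Proof.
case: m => [[[p q] r] s]; case: n => [[[p' q'] r'] s'] /= e.
have f := fun i j => congr1 (fun M : 'M[zl5]_2 => M i j) e.
move: (f 0 0) (f 0 1) (f 1 0) (f 1 1); rewrite !mxE /=.
by move=> -> -> -> ->.
Qed.

Definition E4 (v : C) : m4 := let: (x, y, z) := v in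
  (1 + piz * ZL x 0, piz * ZL y 0, piz * ZL z 0, 1 - piz * ZL x 0).
Definition v0 : C := (0, 0, 0).
Definition vadd (v w : C) : C := let: (x, y, z) := v in let: (x', y', z') := w in
  (x + x', y + y', z + z').
Definition scale (n : nat) (v : C) : C := iter n (vadd v) v0.
Definition fT (v : C) : C := let: (x, y, z) := v in (x + 2%:R * z, y + x + z, z).
Definition fJ (v : C) : C := let: (x, y, z) := v in (- x, z, y).
Definition fS (v : C) : C := let: (x, y, z) := v in (- x, - z, - y).
Definition MT4 : m4 := (1, lam, 0, 1).
Definition MJ4 : m4 := (0, 1, 1, 0).
Definition MS4 : m4 := (0, 1, -1, 0).
Definition va : C := (4%:R, 0, 4%:R).
Definition vb : C := (1, 1, 0).
Definition vc : C := (1, 4%:R, 0).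

Lemma conjT : allC (fun v => mul4 (E4 v) MT4 == mul4 MT4 (E4 (fT v))).
Proof. vm_compute. reflexivity. Qed.
Lemma conjJ : allC (fun v => mul4 (E4 v) MJ4 == mul4 MJ4 (E4 (fJ v))).
Proof. vm_compute. reflexivity. Qed.
Lemma conjS : allC (fun v => mul4 (E4 v) MS4 == mul4 MS4 (E4 (fS v))).
Proof. vm_compute. reflexivity. Qed.

Lemma p2 : piz * piz = 0. Proof. by apply/eqP; vm_compute. Qed.
Lemma eD x y : ZL (x + y) 0 = ZL x 0 + ZL y 0.
Proof.
apply: (@eq_trans _ _ (zl_add (ZL x 0) (ZL y 0))); last by [].
by rewrite /= addr0.
Qed.

Lemma addE v w : mul4 (E4 v) (E4 w) = E4 (vadd v w).
Proof.
case: v => [[x y] z]; case: w => [[x' y'] z'] /=; rewrite !eD.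
set X := ZL x 0; set Y := ZL y 0; set Z := ZL z 0.
set X' := ZL x' 0; set Y' := ZL y' 0; set Z' := ZL z' 0.
congr (_, _, _, _).
- transitivity (1 + piz * (X + X') + piz * piz * (X * X' + Y * Z')); first ring.
  by rewrite p2 mul0r addr0.
- transitivity (piz * (Y + Y') + piz * piz * (X * Y' - Y * X')); first ring.
  by rewrite p2 mul0r addr0.
- transitivity (piz * (Z + Z') + piz * piz * (Z * X' - X * Z')); first ring.
  by rewrite p2 mul0r addr0.
- transitivity (1 - piz * (X + X') + piz * piz * (Z * Y' + X * X')); first ring.
  by rewrite p2 mul0r addr0.
Qed.

Lemma E0 : tomx (E4 v0) = 1%:M.
Proof.
rewrite mx22_1 /=; congr mx22; apply/eqP; vm_compute; reflexivity.
Qed.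

Lemma decomp : allC (fun v => let: (x, y, z) := v in
  v == vadd (scale (nat_of_ord (4%:R * z : 'F_5)%R) va)
         (vadd (scale (nat_of_ord (3%:R * x + 3%:R * y + 2%:R * z : 'F_5)%R) vb)
               (scale (nat_of_ord (3%:R * x + 2%:R * y + 2%:R * z : 'F_5)%R) vc))).
Proof. vm_compute. reflexivity. Qed.

Definition dT v := vadd (fT v) (scale 4 v).
Definition e12 : C := (0, 1, 0).

Lemma keyE : allC (fun v => (v != v0) ==> has (fun n => (scale n v == e12)
   || (scale n (dT v) == e12) || (scale n (dT (dT v)) == e12)) (iota 0 5)).
Proof. vm_compute. reflexivity. Qed.

Lemma span_lemma (P : C -> Prop) : P v0 ->
  (forall v w, P v -> P w -> P (vadd v w)) ->
  (forall v, P v -> P (fT v)) -> (forall v, P v -> P (fJ v)) ->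
  forall v, v != v0 -> P v -> [/\ P va, P vb & P vc].
Proof.
move=> P0 Padd PT PJ v nz Pv.
have Ps n w : P w -> P (scale n w) by move=> Pw; elim: n => //= n IH; exact: Padd.
have Pd w : P w -> P (dT w) by move=> Pw; apply: Padd; [exact: PT | exact: Ps].
have Pe : P e12.
  have /implyP /(_ nz) /hasP [n _] := allCP keyE v.
  case/orP => [/orP [] | ] /eqP <-; apply: Ps => //; auto.
have P21 := PJ _ Pe; have Pdd := Pd _ P21.
have -> : va = vadd (scale 2 (dT (fJ e12))) (vadd (scale 3 e12) (scale 4 (fJ e12))).
  by apply/eqP; vm_compute; reflexivity.
have -> : vb = vadd (scale 3 (dT (fJ e12))) (scale 3 e12).
  by apply/eqP; vm_compute; reflexivity.
have -> : vc = vadd (scale 3 (dT (fJ e12))) (scale 1 e12).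
  by apply/eqP; vm_compute; reflexivity.
split; apply Padd; (try apply (Ps _ _ Pdd)).
by apply Padd; [apply (Ps _ _ Pe) | apply (Ps _ _ P21)].
all: exact (Ps _ _ Pe).
Qed.

Lemma Ma_E : Ma = tomx (E4 va).
Proof. rewrite /Ma mx22_aff /=; congr mx22; apply/eqP; vm_compute; reflexivity. Qed.
Lemma Mb_E : Mb = tomx (E4 vb).
Proof. rewrite /Mb mx22_aff /=; congr mx22; apply/eqP; vm_compute; reflexivity. Qed.
Lemma Mc_E : Mc = tomx (E4 vc).
Proof. rewrite /Mc mx22_aff /=; congr mx22; apply/eqP; vm_compute; reflexivity. Qed.

End Aux.

Local Open Scope group_scope.

Lemma valM (x y : GL2) v w : val x = tomx (E4 v) -> val y = tomx (E4 w) ->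
  val (x * y) = tomx (E4 (vadd v w)).
Proof. by move=> ex ey; change (val x *m val y = tomx (E4 (vadd v w)))%R; rewrite ex ey tomxM addE. Qed.

Lemma val1 : val (1 : GL2) = tomx (E4 v0).
Proof. by rewrite E0. Qed.

Lemma valX (x : GL2) v n : val x = tomx (E4 v) -> val (x ^+ n) = tomx (E4 (scale n v)).
Proof.
move=> ex; elim: n => [|n IH]; first by rewrite expg0 val1.
by rewrite expgS (valM ex IH).
Qed.

Lemma valJ (g : GL2) M f : val g = tomx M ->
  (forall v, mul4 (E4 v) M = mul4 M (E4 (f v))) ->
  forall (x : GL2) v, val x = tomx (E4 v) -> val (x ^ g) = tomx (E4 (f v)).
Proof.
move=> eg hf x v ex.
change (invmx (val g) *m (val x *m val g) = tomx (E4 (f v)))%R.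
rewrite ex.
have -> : (tomx (E4 v) *m val g = val g *m tomx (E4 (f v)))%R.
  by rewrite eg !tomxM hf.
by rewrite mulKmx // GL_unitmx.
Qed.

Lemma valJT (x : GL2) v : val x = tomx (E4 v) -> val (x ^ gT) = tomx (E4 (fT v)).
Proof. apply: (@valJ gT MT4) => // w; apply/eqP; exact: (allCP conjT w). Qed.
Lemma valJJ (x : GL2) v : val x = tomx (E4 v) -> val (x ^ gJ) = tomx (E4 (fJ v)).
Proof. apply: (@valJ gJ MJ4) => // w; apply/eqP; exact: (allCP conjJ w). Qed.
Lemma valJS (x : GL2) v : val x = tomx (E4 v) -> val (x ^ gS) = tomx (E4 (fS v)).
Proof. apply: (@valJ gS MS4) => // w; apply/eqP; exact: (allCP conjS w). Qed.

Definition Qset : {set GL2} := [set g : GL2 | [exists v : C, val g == tomx (E4 v)]].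

Lemma QsetP g : reflect (exists v, val g = tomx (E4 v)) (g \in Qset).
Proof.
rewrite inE; apply: (iffP existsP) => [[v /eqP]|[v ->]]; by exists v.
Qed.

Lemma Qgroup : group_set Qset.
Proof.
apply/group_setP; split; first by apply/QsetP; exists v0; exact: val1.
move=> x y /QsetP [v ev] /QsetP [w ew]; apply/QsetP; exists (vadd v w).
exact: valM.
Qed.
Canonical QG : {group GL2} := Group Qgroup.

Lemma DeltaQ : <<Delta>> = Qset.
Proof.
apply/eqP; rewrite eqEsubset; apply/andP; split.
  rewrite (gen_subG _ QG); apply/subsetP => x xD; apply/QsetP; move: xD; rewrite !inE.
  by case/orP => [/orP [] | ] /eqP -> ;
    [exists va; exact: Ma_E | exists vb; exact: Mb_E | exists vc; exact: Mc_E].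
apply/subsetP => g /QsetP [[[x y] z] eg].
have := allCP decomp (x, y, z); move=> /eqP e.
set i := (_ * z)%R in e; set j := (_ + _ * z)%R in e; set k := (_ + _ * z)%R in e.
have -> : g = ga ^+ i * (gb ^+ j * gc ^+ k).
  apply: val_inj; rewrite eg e.
  by rewrite (valM (@valX ga va i Ma_E) (valM (@valX gb vb j Mb_E) (@valX gc vc k Mc_E))).
by rewrite !groupM ?groupX // mem_gen // !inE eqxx ?orbT.
Qed.

Lemma normQ (g : GL2) f : (forall (x : GL2) v, val x = tomx (E4 v) -> val (x ^ g) = tomx (E4 (f v))) ->
  g \in 'N(Qset).
Proof.
move=> hf; rewrite inE; apply/subsetP => z /imsetP [y /QsetP [v ev] ->].
by apply/QsetP; exists (f v); exact: hf.
Qed.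

Lemma in3P (T : finType) (a b c x : T) : x \in [set a; b; c] -> [\/ x = a, x = b | x = c].
Proof. rewrite !inE; case/orP => [/orP [] | ] /eqP ->; by [constructor 1 | constructor 2 | constructor 3]. Qed.

Theorem lemmaB1 :
  [/\ <<Delta>> :!=: 1,
      [set gS; gT; gJ] \subset 'N(<<Delta>>) &
      forall H : {group GL2},
        H \subset <<Delta>> -> H :!=: 1 ->
        [set gS; gT; gJ] \subset 'N(H) ->
        H :=: <<Delta>>].
Proof.
split.
- apply/trivgPn; exists ga; first by rewrite mem_gen // !inE eqxx.
  apply/eqP => /(congr1 val) e.
  have := @tomx_inj (E4 va) (E4 v0) (etrans (esym Ma_E) (etrans e val1)).
  by move=> /eqP h; vm_compute in h.
- rewrite DeltaQ; apply/subsetP => g /in3P [] ->.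
  + exact: normQ valJS.
  + exact: normQ valJT.
  + exact: normQ valJJ.
move=> H sHD /trivgPn [h hH nh1] nH.
have nHg g : g \in [set gS; gT; gJ] -> forall x, x \in H -> x ^ g \in H.
  by move=> gi x xH; rewrite memJ_norm // (subsetP nH).
pose P v := exists2 x, x \in H & val x = tomx (E4 v).
have : h \in Qset by rewrite -DeltaQ (subsetP sHD).
case/QsetP => v ev.
have nz : v != v0.
  apply: contra nh1 => /eqP e; apply/eqP/val_inj; by rewrite ev e val1.
have [Pa Pb Pc] : [/\ P va, P vb & P vc].
  apply: (@span_lemma P) nz _.
  - by exists 1; [exact: group1 | exact: val1].
  - move=> w1 w2 [x1 H1 e1] [x2 H2 e2]; exists (x1 * x2); first exact: groupM.
    exact: valM.
  - move=> w [x Hx e]; exists (x ^ gT); first by apply: nHg; rewrite ?inE ?eqxx ?orbT.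
    exact: valJT.
  - move=> w [x Hx e]; exists (x ^ gJ); first by apply: nHg; rewrite ?inE ?eqxx ?orbT.
    exact: valJJ.
  - by exists h.
apply/eqP; rewrite eqEsubset sHD /= gen_subG; apply/subsetP => x; rewrite !inE.
case/orP => [/orP [] | ] /eqP ->.
- by case: Pa => y Hy ey; have -> : ga = y by apply: val_inj; rewrite ey /= Ma_E.
- by case: Pb => y Hy ey; have -> : gb = y by apply: val_inj; rewrite ey /= Mb_E.
- by case: Pc => y Hy ey; have -> : gc = y by apply: val_inj; rewrite ey /= Mc_E.
Qed.
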